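(* Let $f$ be a multiplicative function from the positive integers to the nonnegative integers with $f(p^{k-1})\le f(p^k)$ for all primes $p$ and integers $k\ge1$. Every positive integer is $f$-practical if and only if $$f(p^k)\le S_f(p^{k-1})+1$$ holds for every prime $p$ and every integer $k\ge1$.
   Context: $f$ multiplicative means $f(1)=1$ and $f(ab)=f(a)f(b)$ for coprime $a,b$. $S_f(n)=\sum_{d\mid n} f(d)$. A positive integer $n$ is $f$-practical if every positive integer $m\le S_f(n)$ equals $\sum_{d\in\mathcal{D}}f(d)$ for some set $\mathcal{D}$ of distinct divisors of $n$. *)

(* Defs.v *)
From mathcomp Require Import all_boot.
Set Implicit Arguments. Unset Strict Implicit. Unset Printing Implicit Defensive.

(* f : positive integers -> nonnegative integers, modelled as nat -> nat;
   the value f 0 is irrelevant (never used). *)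
Definition multiplicative (f : nat -> nat) : Prop :=
  f 1 = 1 /\ forall a b, 0 < a -> 0 < b -> coprime a b -> f (a * b) = f a * f b.

Definition S_f (f : nat -> nat) (n : nat) : nat := \sum_(d <- divisors n) f d.

Definition f_practical (f : nat -> nat) (n : nat) : Prop :=
  forall m, 0 < m -> m <= S_f f n ->
    exists D : seq nat, [/\ uniq D, {subset D <= divisors n} &
                           m = \sum_(d <- D) f d].

(* Main.v *)
Require Import Defs.
From mathcomp Require Import all_boot.
From mathcomp Require Import zify.

Definition reach (L : seq nat) m := exists s t, perm_eq L (s ++ t) /\ sumn s = m.
Definition complete (L : seq nat) := forall m, m <= sumn L -> reach L m.

Lemma reach_perm L L' m : perm_eq L L' -> reach L m -> reach L' m.
Proof.
move=> pLL' [s [t [p e]]]; exists s, t; split=> //.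
rewrite perm_sym in pLL'; exact: perm_trans pLL' p.
Qed.

Lemma reach_cat L M a b : reach L a -> reach M b -> reach (L ++ M) (a + b).
Proof.
move=> [s [t [p e]]] [s' [t' [p' e']]]; exists (s ++ s'), (t ++ t'); split.
  apply: (perm_trans (perm_cat p p')).
  by rewrite -!catA perm_cat2l perm_catCA.
by rewrite sumn_cat e e'.
Qed.

Lemma sumn_scale y L : sumn (map (muln y) L) = y * sumn L.
Proof. by elim: L => [|x L IH] /=; rewrite ?muln0 // IH mulnDr. Qed.

Lemma reach_scale y L m : reach L m -> reach (map (muln y) L) (y * m).
Proof.
move=> [s [t [p e]]]; exists (map (muln y) s), (map (muln y) t); split.
  by rewrite -map_cat perm_map.
by rewrite sumn_scale e.
Qed.

Lemma reach0 L : reach L 0.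
Proof. by exists [::], L. Qed.

Lemma lemmaC L L2 y : complete L -> complete L2 -> y <= sumn L + 1 ->
  complete (L ++ map (muln y) L2).
Proof.
move=> cL cL2 hy m; rewrite sumn_cat sumn_scale.
suff H : forall k, k <= sumn L2 -> forall m, m <= sumn L + y * k ->
  reach (L ++ map (muln y) L2) m by apply: H.
elim=> [|k IH] hk m0 hm0.
  by rewrite -[m0]addn0; apply: reach_cat; [apply: cL; lia | apply: reach0].
have [hle|hlt] := leqP m0 (sumn L + y * k); first by apply: IH => //; lia.
have -> : m0 = (m0 - y * k.+1) + y * k.+1 by rewrite mulnS; lia.
apply: reach_cat; first by apply: cL; rewrite mulnS in hm0 *; lia.
by apply: reach_scale; apply: cL2.
Qed.

Lemma extract (f : nat -> nat) L s t : perm_eq (map f L) (s ++ t) ->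
  exists D, subseq D L /\ sumn s = \sum_(d <- D) f d.
Proof.
elim: L s t => [|a L IH] s t /=.
  move=> /perm_size; rewrite size_cat; case: s => //; case: t => // _.
  by exists [::]; rewrite big_nil.
move=> p; have : f a \in s ++ t by rewrite -(perm_mem p) mem_head.
rewrite mem_cat; case/orP => [ha|ha].
  have ps := perm_to_rem ha.
  have : perm_eq (map f L) (rem (f a) s ++ t).
    by rewrite -(perm_cons (f a)); apply: (perm_trans p); rewrite -cat_cons perm_cat2r.
  case/IH => D [sD eD]; exists (a :: D); split; first by rewrite /= eqxx.
  by rewrite big_cons -eD (perm_sumn ps).
have pt := perm_to_rem ha.
have : perm_eq (map f L) (s ++ rem (f a) t).
  rewrite -(perm_cons (f a)); apply: (perm_trans p).
  rewrite -cat1s; apply/permP => x; move/permP: pt => /(_ x).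
  rewrite !count_cat /= => ->; lia.
case/IH => D [sD eD]; exists D; split=> //.
exact: (subseq_trans sD (subseq_cons L a)).
Qed.

Lemma divisors_split p b k : prime p -> 0 < b -> coprime p b ->
  perm_eq (divisors (p^k * b)) [seq p^i * e | i <- iota 0 k.+1, e <- divisors b].
Proof.
move=> pp b0 cpb; have p0 := prime_gt0 pp.
have n0 : 0 < p ^ k * b by rewrite muln_gt0 expn_gt0 p0.
apply: uniq_perm; first exact: divisors_uniq.
  apply: allpairs_uniq; [exact: iota_uniq | exact: divisors_uniq |].
  move=> [i e] [j e'] H1 H2.
  have [[i1 e1] [/= hi he [-> ->]]] := allpairsP H1.
  have [[j1 e2] [/= hj he2 [-> ->]]] := allpairsP H2.
  move=> /= eq.
  have ce : forall x, x \in divisors b -> coprime p x /\ 0 < x.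
    move=> x; rewrite -dvdn_divisors // => hx; split; first exact: coprime_dvdr hx cpb.
    exact: dvdn_gt0 hx.
  have [c1 e10] := ce _ he; have [c2 e20] := ce _ he2.
  have : logn p (p ^ i1 * e1) = logn p (p ^ j1 * e2) by rewrite eq.
  rewrite !lognM ?expn_gt0 ?p0 // !pfactorK // !logn_coprime // !addn0 => eij.
  subst j1; congr (_, _); apply/eqP; rewrite -(@eqn_pmul2l (p ^ i1)) ?expn_gt0 ?p0 //.
  by apply/eqP.
move=> x; rewrite -dvdn_divisors //; apply/idP/allpairsP.
  move=> hx; have x0 := dvdn_gt0 n0 hx.
  have [q cq ex] := pfactor_coprime pp x0.
  exists (logn p x, q); split.
  - rewrite mem_iota add0n ltnS.
    have := dvdn_leq_log p n0 hx.
    by rewrite lognM ?expn_gt0 ?p0 // pfactorK // (logn_coprime cpb) addn0.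
  - rewrite -dvdn_divisors //.
    have : q %| p ^ k * b by apply: dvdn_trans hx; rewrite ex dvdn_mulr.
    by rewrite Gauss_dvdr // coprime_sym coprimeXl.
  - by rewrite mulnC -ex.
move=> [[i e] [hi he ->]]; rewrite dvdn_mul //.
  by apply: dvdn_exp2l; move: hi; rewrite mem_iota; lia.
by rewrite dvdn_divisors.
Qed.

Lemma complete_perm L L' : perm_eq L L' -> complete L -> complete L'.
Proof.
move=> pL cL m; rewrite -(perm_sumn pL) => hm.
exact: reach_perm pL (cL m hm).
Qed.

Lemma sum_iota_last (F : nat -> nat) k :
  \sum_(i <- iota 0 k.+1) F i = \sum_(i <- iota 0 k) F i + F k.
Proof. by rewrite -addn1 iotaD big_cat /= big_seq1. Qed.

Lemma Sf_pk f p k : prime p -> S_f f (p ^ k) = \sum_(i <- iota 0 k.+1) f (p ^ i).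
Proof.
move=> pp; rewrite /S_f -[p ^ k]muln1.
rewrite (perm_big _ (divisors_split p 1 k pp (ltn0Sn 0) (coprimen1 p))).
have -> : [seq p ^ i * e | i <- iota 0 k.+1, e <- divisors 1] =
          map (fun i => p ^ i) (iota 0 k.+1).
  by elim: (iota _ _) => //= a s ->; rewrite muln1.
by rewrite big_map.
Qed.

Lemma sum_sub (F : nat -> nat) D L : uniq D -> {subset D <= L} -> uniq L ->
  \sum_(x <- D) F x <= \sum_(x <- L) F x.
Proof.
move=> uD sD uL.
have pL : perm_eq L (D ++ [seq x <- L | x \notin D]).
  apply: uniq_perm => //.
    rewrite cat_uniq uD filter_uniq // andbT /=.
    by apply/hasPn => x; rewrite mem_filter => /andP[].
  move=> x; rewrite mem_cat mem_filter.
  by case: (boolP (x \in D)) => h //=; rewrite (sD _ h).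
by rewrite (perm_big _ pL) big_cat leq_addr.
Qed.

Lemma sum_mem (F : nat -> nat) x L : x \in L -> F x <= \sum_(y <- L) F y.
Proof. by move=> h; rewrite (perm_big _ (perm_to_rem h)) big_cons leq_addr. Qed.

Theorem theorem2p7 (f : nat -> nat) :
  multiplicative f ->
  (forall p k, prime p -> 0 < k -> f (p ^ k.-1) <= f (p ^ k)) ->
  ((forall n, 0 < n -> f_practical f n) <->
   (forall p k, prime p -> 0 < k -> f (p ^ k) <= S_f f (p ^ k.-1) + 1)).
Proof.
move=> [f1 fM] _; split.
  move=> H p k pp k0; rewrite leqNgt; apply/negP => hlt.
  set T := S_f f (p ^ k.-1).
  have eSk : S_f f (p ^ k) = T + f (p ^ k).
    by rewrite /T !Sf_pk // -{1}(prednK k0) sum_iota_last prednK.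
  have pk0 : 0 < p ^ k by rewrite expn_gt0 prime_gt0.
  have [D [uD sD eD]] := H (p ^ k) pk0 (T + 1) (ltac:(lia)) (ltac:(rewrite eSk; lia)).
  case: (boolP (p ^ k \in D)) => hin.
    by have := sum_mem f _ _ hin; rewrite -eD; lia.
  have sD' : {subset D <= divisors (p ^ k.-1)}.
    move=> x hx; have := sD _ hx; rewrite -!dvdn_divisors ?expn_gt0 ?prime_gt0 //.
    case/(dvdn_pfactor _ _ pp) => j hj ej.
    have : j != k by apply: contraNneq hin => ejk; rewrite -ejk -ej.
    move=> njk; rewrite ej; apply: dvdn_exp2l; lia.
  by have := sum_sub f _ _ uD sD' (divisors_uniq _); rewrite -eD; rewrite -/(S_f f _) -/T; lia.
move=> H.
have c1 : complete (map f (divisors 1)).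
  rewrite /= f1 => m /= hm; case: m hm => [|[|]] // _; first exact: reach0.
  by exists [:: 1], [::].
have main : forall N n, n <= N -> 0 < n -> complete (map f (divisors n)).
  elim=> [|N IHN] n hn n0; first lia.
  have [n1|n1] := leqP n 1; first by have -> : n = 1 by lia.
  have pp := pdiv_prime n1; set p := pdiv n in pp *.
  have p0 := prime_gt0 pp.
  have [b cb eb] := pfactor_coprime pp n0; set k := logn p n in eb.
  have k0 : 0 < k by rewrite logn_gt0 mem_primes pp n0 pdiv_dvd.
  have b0 : 0 < b by move: n0; rewrite eb muln_gt0 => /andP[].
  have bn : b < n.
    rewrite eb; apply: ltn_Pmulr => //.
    rewrite -(prednK k0) expnS; have := expn_gt0 p k.-1; rewrite p0 /=.
    have := prime_gt1 pp; nia.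
  have cLb := IHN b ltac:(lia) b0.
  set Lb := map f (divisors b).
  have Lb1 : 1 <= sumn Lb.
    have := sum_mem f _ _ (divisor1 b); rewrite f1 /Lb sumnE big_map //.
  pose Lj j := [seq f (p ^ i) * f e | i <- iota 0 j.+1, e <- divisors b].
  have Lsplit : forall j, Lj j.+1 = Lj j ++ map (muln (f (p ^ j.+1))) Lb.
    move=> j; rewrite /Lj -[j.+2]addn1 iotaD allpairs_cat /= cats0 add0n.
    by rewrite /Lb -map_comp.
  have claim : forall j, complete (Lj j) /\
      sumn (Lj j) = (\sum_(i <- iota 0 j.+1) f (p ^ i)) * sumn Lb.
    elim=> [|j [cj sj]].
      have -> : Lj 0 = [::] ++ map (muln (f (p ^ 0))) Lb.
        by rewrite /Lj /= cats0 /Lb -map_comp.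
      split; last by rewrite /= sumn_scale big_cons big_nil expn0 f1 addn0.
      apply: lemmaC => //; last by rewrite expn0 f1.
      by move=> m; rewrite leqn0 => /eqP ->; apply: reach0.
    rewrite Lsplit; split.
      apply: lemmaC => //; rewrite sj.
      have := H p j.+1 pp (ltn0Sn _); rewrite Sf_pk //= => hy.
      apply: (leq_trans hy); rewrite leq_add2r; exact: leq_pmulr.
    by rewrite sumn_cat (sumn_scale (f (p ^ j.+1)) Lb) sj (sum_iota_last _ j.+1) mulnDl.
  have [ck _] := claim k.
  apply: complete_perm ck; rewrite perm_sym.
  rewrite eb mulnC; apply: (perm_trans (perm_map f (divisors_split p b k pp b0 cb))).
  rewrite map_allpairs; have -> // : [seq f (p ^ x * y) | x <- iota 0 k.+1, y <- divisors b] = Lj k.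
  apply/eq_in_allpairs => i e _ he /=; apply: fM; rewrite ?expn_gt0 ?p0 //.
    by move: he; rewrite -dvdn_divisors // => /(dvdn_gt0 b0).
  apply: coprimeXl; apply: coprime_dvdr cb.
  by rewrite dvdn_divisors.
move=> n n0 m m0 hm.
have [s [t [pst es]]] := main n n (leqnn n) n0 m
  (ltac:(by rewrite sumnE big_map)).
have [D [sD eD]] := extract f _ _ _ pst.
exists D; split; first exact: subseq_uniq sD (divisors_uniq _).
  exact: mem_subseq sD.
by rewrite -es eD.
Qed.
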